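(* Let $X$ and $Y$ be locally compact paracompact Hausdorff spaces with countable bases, let $\varepsilon$ be a coarsely connected proper coarse structure on $X$ and $\zeta$ a coarsely connected proper coarse structure on $Y$, and suppose there is a coarse equivalence $\pi:(Y,\zeta)\to(X,\varepsilon)$ (not necessarily continuous). Then the categories $\mathrm{MPers}(\varepsilon)$ and $\mathrm{MPers}(\zeta)$ are isomorphic.
   Context: Artin–Wraith glueing: $\mathrm{Closed}(A)$ is the set of closed subsets of a space $A$. A map $f:\mathrm{Closed}(A)\to\mathrm{Closed}(B)$ is admissible if $f(\emptyset)=\emptyset$ and $f(F_1\cup F_2)=f(F_1)\cup f(F_2)$. For admissible $f$, $A+_fB$ is $A\sqcup B$ with closed sets the $D$ with $D\cap A$ closed in $A$, $D\cap B$ closed in $B$ and $f(D\cap A)\subseteq D$. $\mathrm{Comp}(X)$: objects are compact spaces $X+_fW$ with $W$ compact Hausdorff, morphisms continuous maps restricting to the identity on $X$. Coarse notions (Roe): a coarse structure on $X$ is a family of subsets of $X\times X$ containing the diagonal, closed under subsets, finite unions, inverses and compositions; bounded sets are $B$ with $B\times B$ in the structure; proper means the structure contains a neighbourhood of the diagonal and bounded sets are relatively compact; coarsely connected means every $\{(x,y)\}$ belongs to it. Coarse maps send controlled sets (via $h\times h$) to controlled sets and have bounded preimages of bounded sets; a coarse equivalence is a coarse map with a coarse quasi-inverse such that both composites are close to the identities (two maps $h,h'$ are close if $\{(h(s),h'(s))\}$ is controlled). For a Hausdorff compactification $X+_fW$ of $X$ ($X$ dense), $e\subseteq X\times X$ is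 perspective if $\mathrm{Cl}_{(X+_fW)^2}(e)\cap((X+_fW)^2-X^2)\subseteq\{(p,p):p\in W\}$; $\varepsilon_f$ is the set of perspective sets. The compactification is perspective for $\varepsilon$ if $\varepsilon\subseteq\varepsilon_f$. $\mathrm{Pers}(\varepsilon)$ is the full subcategory of $\mathrm{Comp}(X)$ of perspective compactifications, and $\mathrm{MPers}(\varepsilon)$ is its full subcategory of metrizable objects. *)

(* Defs.v *)
From HB Require Import structures.
From mathcomp Require Import all_boot all_order all_algebra.
From mathcomp Require Import all_classical all_reals all_analysis.
From mathcomp Require Import Rstruct.
Set Implicit Arguments. Unset Strict Implicit. Unset Printing Implicit Defensive.
Import Order.TTheory GRing.Theory Num.Theory.
Local Open Scope classical_set_scope.

Section Glue.
Context (X W : topologicalType).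

Record admissible := Admissible {
  amap :> set X -> set W;
  amap_closed : forall F, closed F -> closed (amap F);
  amap_junk : forall F, ~ closed F -> amap F = set0;
  amap0 : amap set0 = set0;
  amapU : forall F1 F2, closed F1 -> closed F2 ->
    amap (F1 `|` F2) = amap F1 `|` amap F2 }.

Lemma amap_mono (f : admissible) (P Q : set X) : closed P -> closed Q ->
  P `<=` Q -> f P `<=` f Q.
Proof.
move=> cP cQ PQ; rewrite -(setUidr PQ) amapU //; by move=> w fw; left.
Qed.

Definition glue (f : admissible) : Type := (X + W)%type.

Definition glue_closed (f : admissible) (D : set (X + W)) :=
  [/\ closed (@inl X W @^-1` D), closed (@inr X W @^-1` D)
    & f (@inl X W @^-1` D) `<=` @inr X W @^-1` D].

Variable f : admissible.

Definition glue_open (U : set (glue f)) := glue_closed f (~` U).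

Lemma glue_opT : glue_open setT.
Proof.
rewrite /glue_open /glue_closed setCT !preimage_set0 amap0.
by split => //; exact: closed0.
Qed.

Lemma glue_opI : setI_closed glue_open.
Proof.
move=> U V [cU1 cU2 fU] [cV1 cV2 fV]; rewrite /glue_open setCI.
rewrite /glue_closed !preimage_setU; split; [exact: closedU|exact: closedU|].
by rewrite amapU // => w [/fU|/fV]; [left|right].
Qed.

Lemma glue_op_bigU (I : Type) (g : I -> set (glue f)) :
  (forall i, glue_open (g i)) -> glue_open (\bigcup_i g i).
Proof.
move=> hg; rewrite /glue_open setC_bigcup /glue_closed !preimage_bigcap.
split; [apply: closed_bigI => i _; by case: (hg i)
       |apply: closed_bigI => i _; by case: (hg i)|].
move=> w fw i _; have [c1 _ fi] := hg i; apply: fi.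
apply: amap_mono fw => //; first by apply: closed_bigI => j _; case: (hg j).
by move=> x; apply.
Qed.

HB.instance Definition _ := Choice.on (glue f).
HB.instance Definition _ :=
  isOpenTopological.Build (glue f) glue_opT glue_opI glue_op_bigU.

Definition ginl : X -> glue f := @inl X W.
Definition ginr : W -> glue f := @inr X W.

End Glue.

Lemma glue_openE (X W : topologicalType) (f : admissible X W) :
  @open (glue f) = @glue_open X W f.
Proof. by []. Qed.

Definition paracompact (T : topologicalType) :=
  forall (I : Type) (U : I -> set T), (forall i, open (U i)) ->
    \bigcup_i U i = setT ->
  exists (J : Type) (V : J -> set T),
    [/\ (forall j, open (V j)), \bigcup_j V j = setT,
        (forall j, exists i, V j `<=` U i)
      & (forall x : T, exists N, nbhs x N /\
           finite_set [set j | V j `&` N !=set0])].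

Definition metrizable (T : topologicalType) :=
  exists d : T -> T -> Rdefinitions.R,
  [/\ (forall x y, d x y = 0%R <-> x = y),
      (forall x y, d x y = d y x),
      (forall x y z, (d x z <= d x y + d y z)%R)
    & (forall A : set T, open A <->
        (forall x, A x -> exists e : Rdefinitions.R, (0 < e)%R /\
           [set y | (d x y < e)%R] `<=` A))].

Record category := Category {
  Ob : Type;
  Hom : Ob -> Ob -> Type;
  cid : forall a, Hom a a;
  ccomp : forall x y z, Hom y z -> Hom x y -> Hom x z }.
Arguments Hom : clear implicits.
Arguments cid {c} a.
Arguments ccomp {c x y z}.

Record functor (C D : category) := Functor {
  F0 : Ob C -> Ob D;
  F1 : forall a b, Hom C a b -> Hom D (F0 a) (F0 b);
  F_id : forall a, F1 (cid a) = cid (F0 a);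
  F_comp : forall a b c (g : Hom C b c) (h : Hom C a b),
    F1 (ccomp g h) = ccomp (F1 g) (F1 h) }.
Arguments F1 {C D} f {a b}.

Definition castHom (C : category) (a a' b b' : Ob C) (ea : a = a') (eb : b = b')
  (h : Hom C a b) : Hom C a' b' :=
  match ea in _ = a1 return Hom C a1 b' with
  | erefl => match eb in _ = b1 return Hom C a b1 with erefl => h end
  end.

Definition cat_iso (C D : category) : Prop :=
  exists (F : functor C D) (G : functor D C)
    (eGF : forall a, F0 G (F0 F a) = a) (eFG : forall b, F0 F (F0 G b) = b),
    (forall a b (h : Hom C a b), castHom (eGF a) (eGF b) (F1 G (F1 F h)) = h) /\
    (forall a b (h : Hom D a b), castHom (eFG a) (eFG b) (F1 F (F1 G h)) = h).

Record compObj (X : topologicalType) := CompObj {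
  cW : topologicalType;
  cf : admissible X cW;
  cW_compact : compact [set: cW];
  cW_hausdorff : hausdorff_space cW;
  c_compact : compact [set: glue cf] }.

Definition compHom (X : topologicalType) (a b : compObj X) :=
  {h : glue (cf a) -> glue (cf b) |
     continuous h /\ forall x : X, h (ginl (cf a) x) = ginl (cf b) x}.

Definition compHom_id (X : topologicalType) (a : compObj X) : compHom a a.
Proof. by exists id; split => // x; apply: cvg_id. Defined.

Definition compHom_comp (X : topologicalType) (a b c : compObj X)
  (g : compHom b c) (h : compHom a b) : compHom a c.
Proof.
exists (proj1_sig g \o proj1_sig h); split.
- move=> x; apply: continuous_comp; [exact: (proj1 (proj2_sig h))|].
  exact: (proj1 (proj2_sig g)).
- by move=> x /=; rewrite (proj2 (proj2_sig h)) (proj2 (proj2_sig g)).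
Defined.

Definition Comp (X : topologicalType) : category :=
  @Category (compObj X) (@compHom X) (@compHom_id X) (@compHom_comp X).

Definition diagonal (T : Type) : set (T * T) := [set p | p.1 = p.2].
Arguments diagonal : clear implicits.
Definition rel_inv (T : Type) (e : set (T * T)) : set (T * T) :=
  [set p | e (p.2, p.1)].
Definition rel_comp (T : Type) (e e' : set (T * T)) : set (T * T) :=
  [set p | exists y, e (p.1, y) /\ e' (y, p.2)].

Definition coarse_structure (T : Type) (E : set (set (T * T))) :=
  [/\ E (diagonal T),
      (forall e e', E e -> e' `<=` e -> E e'),
      (forall e e', E e -> E e' -> E (e `|` e')),
      (forall e, E e -> E (rel_inv e))
    & (forall e e', E e -> E e' -> E (rel_comp e e'))].

Definition bounded_for (T : Type) (E : set (set (T * T))) (B : set T) :=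
  E (B `*` B).

Definition proper_coarse (T : topologicalType) (E : set (set (T * T))) :=
  [/\ coarse_structure E,
      (exists N, E N /\ exists U : set (T * T),
          [/\ open U, diagonal T `<=` U & U `<=` N])
    & (forall B, bounded_for E B -> compact (closure B))].

Definition coarsely_connected (T : Type) (E : set (set (T * T))) :=
  forall x y : T, E [set (x, y)].

Definition coarse_map (S T : Type) (ES : set (set (S * S)))
  (ET : set (set (T * T))) (h : S -> T) :=
  (forall e, ES e -> ET ((fun p => (h p.1, h p.2)) @` e)) /\
  (forall B, bounded_for ET B -> bounded_for ES (h @^-1` B)).

Definition close_maps (S T : Type) (ET : set (set (T * T))) (h h' : S -> T) :=
  ET (range (fun s => (h s, h' s))).

Definition coarse_equivalence (S T : Type) (ES : set (set (S * S)))
  (ET : set (set (T * T))) (h : S -> T) :=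
  coarse_map ES ET h /\
  exists h' : T -> S, [/\ coarse_map ET ES h',
     close_maps ES (h' \o h) id & close_maps ET (h \o h') id].

Definition is_compactification (X : topologicalType) (o : compObj X) :=
  hausdorff_space (glue (cf o)) /\ closure (range (ginl (cf o))) = setT.

Definition perspective (X : topologicalType) (o : compObj X) (e : set (X * X)) :=
  closure ((fun p : X * X => (ginl (cf o) p.1, ginl (cf o) p.2)) @` e)
    `&` ~` range (fun p : X * X => (ginl (cf o) p.1, ginl (cf o) p.2))
  `<=` range (fun w : cW o => (ginr (cf o) w, ginr (cf o) w)).

Definition MPers_obj (X : topologicalType) (E : set (set (X * X)))
  (o : compObj X) :=
  [/\ is_compactification o, E `<=` perspective o & metrizable (glue (cf o))].

Definition MPers (X : topologicalType) (E : set (set (X * X))) : category :=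
  @Category {o : compObj X | MPers_obj E o}
    (fun a b => compHom (proj1_sig a) (proj1_sig b))
    (fun a => compHom_id (proj1_sig a))
    (fun a b c g h => compHom_comp g h).

(* Main.v *)
Require Import Defs.
From HB Require Import structures.
From mathcomp Require Import all_boot all_order all_algebra.
From mathcomp Require Import all_classical all_reals all_analysis.
From mathcomp Require Import Rstruct Rstruct_topology ring lra.
From Stdlib Require Eqdep.
Require Import Defs.
Set Implicit Arguments. Unset Strict Implicit. Unset Printing Implicit Defensive.
Local Open Scope classical_set_scope.

Section GlueFacts.
Context (X W : topologicalType) (f : admissible X W).
Local Notation K := (glue f).

Definition gset (A : set X) (B : set W) : set K :=
  fun p => match p with inl x => A x | inr w => B w end.

Lemma gsetE (D : set K) : D = gset (@inl X W @^-1` D) (@inr X W @^-1` D).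
Proof. by apply/funext => -[x|w]. Qed.

Lemma gsetC A B : ~` gset A B = gset (~` A) (~` B).
Proof. by apply/funext => -[x|w]. Qed.

Lemma gclosedE (D : set K) : closed D <-> glue_closed f D.
Proof. by rewrite -openC glue_openE /glue_open setCK. Qed.

Lemma gopenE (D : set K) : open D <-> glue_closed f (~` D).
Proof. by rewrite glue_openE. Qed.

Lemma gset_closed A B : closed A -> closed B -> f A `<=` B -> closed (gset A B).
Proof. by move=> cA cB fAB; apply/gclosedE; split. Qed.

Lemma closed_gset A B : closed (gset A B) -> [/\ closed A, closed B & f A `<=` B].
Proof. by move/gclosedE => [] . Qed.

Lemma gset_open U V : open U -> open V -> f (~` U) `<=` ~` V -> open (gset U V).
Proof.
move=> oU oV h; apply/gopenE; rewrite gsetC; split => //=.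
- exact: (open_closedC oU).
- exact: (open_closedC oV).
Qed.

Lemma open_gset U V : open (gset U V) -> [/\ open U, open V & f (~` U) `<=` ~` V].
Proof.
move/gopenE; rewrite gsetC => -[] /= c1 c2 h; split => //.
- by rewrite -closedC.
- by rewrite -closedC.
Qed.

Lemma ginl_continuous : continuous (@inl X W : X -> K).
Proof.
apply/continuousP => A /gopenE [c1 _ _]; rewrite -closedC; exact: c1.
Qed.

Lemma ginr_continuous : continuous (@inr X W : W -> K).
Proof.
apply/continuousP => A /gopenE [_ c2 _]; rewrite -closedC; exact: c2.
Qed.

Lemma closed_inl (D : set K) : closed D -> closed (@inl X W @^-1` D).
Proof. by case/gclosedE. Qed.

Lemma closed_inr (D : set K) : closed D -> closed (@inr X W @^-1` D).
Proof. by case/gclosedE. Qed.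

Lemma open_inl (D : set K) : open D -> open (@inl X W @^-1` D).
Proof. by rewrite {1}(gsetE D) => /open_gset []. Qed.

Lemma open_inr (D : set K) : open D -> open (@inr X W @^-1` D).
Proof. by rewrite {1}(gsetE D) => /open_gset []. Qed.

Lemma closure_min (A B : set K) : closed B -> A `<=` B -> closure A `<=` B.
Proof. by move=> cB AB; rewrite (closure_id B).1 //; exact: closureS. Qed.

Lemma closure_inl (F : set X) : closed F ->
  closure (gset F set0) = gset F (f F).
Proof.
move=> cF; apply/seteqP; split.
  apply: closure_min; first by apply: gset_closed => //; exact: amap_closed.
  by move=> [x|w] //=.
move=> [x|w] /= h; first exact: subset_closure.
have /gclosedE [c1 c2 c3] := @closed_closure _ (gset F set0).
apply: c3; apply: (amap_mono cF c1) h => x Fx.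
exact: subset_closure.
Qed.

Lemma nbhs_inl (x : X) (N : set X) : nbhs x N -> nbhs (inl x : K) (gset N set0).
Proof.
rewrite nbhsE => -[B [oB Bx] BN]; rewrite nbhsE; exists (gset B set0).
  split => //; apply: gset_open => //; first exact: open0.
  by move=> w _ .
by move=> [y|w] //= /BN.
Qed.

Lemma closed_W : closed (gset set0 setT).
Proof. apply: gset_closed; [exact: closed0|exact: closedT|by []]. Qed.

Lemma open_X : open (gset setT set0).
Proof. by apply: (@gset_open setT set0 openT open0) => w _ []. Qed.

Lemma gset_image (C : set X) : gset C set0 = (@inl X W) @` C.
Proof.
apply/seteqP; split; first by move=> [x|w] //= Cx; exists x.
by move=> p [x Cx <-].
Qed.

Lemma compact_amap0 (hK : hausdorff_space K) (C : set X) :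
  compact C -> f C = set0.
Proof.
move=> cC.
have cpt : compact (gset C set0).
  rewrite gset_image; apply: continuous_compact => //.
  apply: continuous_subspaceT => x; exact: ginl_continuous.
have clC : closed C.
  have := compact_closed hK cpt => /gclosedE [] //.
apply/seteqP; split => // w fCw.
have : closure (gset C set0) (inr w) by rewrite closure_inl.
by move/(compact_closed hK cpt).
Qed.

Lemma compact_inl (C : set X) : compact (gset C set0) -> compact C.
Proof.
move=> cpt F PF FC.
have FC' : (inl @ F) (gset C set0) by [].
have PF' : ProperFilter (inl @ F : set_system K) by exact: fmap_proper_filter.
have [p [Cp clp]] := cpt _ PF' FC'.
case: p Cp clp => [x|w] //= Cx clx; exists x; split => // A B FA nB.
have [[y|w] [] //= Ay By] := clx (gset A setT) (gset B set0) FA (nbhs_inl nB).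
by exists y.
Qed.

Lemma amap0_compact (cK : compact [set: K]) (A : set X) :
  closed A -> f A = set0 -> compact A.
Proof.
move=> cA fA; apply: compact_inl.
apply: (subclosed_compact _ cK) => //.
by apply: gset_closed => //; [exact: closed0| rewrite fA].
Qed.

End GlueFacts.

Lemma persp_mono (X W : topologicalType) (f : admissible X W)
  (cK : compact [set: glue f]) (e : set (X * X))
  (He : closure ((fun p : X * X => (ginl f p.1, ginl f p.2)) @` e)
    `&` ~` range (fun p : X * X => (ginl f p.1, ginl f p.2))
    `<=` range (fun w : W => (ginr f w, ginr f w)))
  (A F : set X) : closed A -> closed F ->
  (forall x, F x -> exists a, A a /\ e (x, a)) -> f F `<=` f A.
Proof.
move=> cA cF hFA w fFw.
pose D (V : set (glue f)) : set (glue f) :=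
  [set q | exists x a, [/\ F x, A a, e (x, a), V (inl x) & q = inl a]].
pose G := filter_from (nbhs (inr w : glue f)) D.
have FG : Filter G.
  apply: filter_from_filter; first by exists setT; exact: filterT.
  move=> V1 V2 n1 n2; exists (V1 `&` V2); first exact: filterI.
  move=> q [x [a [Fx Aa ex [V1x V2x] ->]]]; split; exists x, a; split => //.
have PG : ProperFilter G.
  apply: filter_from_proper => V nV.
  have : closure (@gset _ _ f F set0) (inr w) by rewrite closure_inl.
  move/(_ V nV) => [[x|w'] [] //= Fx Vx].
  have [a [Aa ex]] := hFA x Fx.
  by exists (inl a), x, a.
have GT : G setT by exists setT => //; exact: filterT.
have [p [_ clp]] := cK G PG GT.
have c1 : closure (@gset _ _ f A set0) p.
  move=> N nN.
  have GD : G (D setT) by exists setT => //; exact: filterT.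
  have [q [[x [a [Fx Aa ex _ ->]]] Nq]] := clp (D setT) N GD nN.
  by exists (inl a).
have c2 : closure ((fun p : X * X => (ginl f p.1, ginl f p.2)) @` e) (inr w, p).
  move=> M [[V U] /= [nV nU] sub].
  have GD : G (D V) by exists V.
  have [q [[x [a [Fx Aa ex Vx ->]]] Uq]] := clp (D V) U GD nU.
  exists (inl x, inl a); split; first by exists (x, a).
  by apply: sub; split.
have nXX : (~` range (fun p : X * X => (ginl f p.1, ginl f p.2))) (inr w, p).
  by move=> [[x1 x2] _ [h1 _]].
have [w0 _ [e1 e2]] := He _ (conj c2 nXX).
move: c1; rewrite closure_inl // -e2 /=.
by move: e1; rewrite /ginr => -[->].
Qed.

Lemma compact_local (T : topologicalType) (P : set T -> Prop) (C : set T) :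
  compact C -> P set0 -> (forall A B, P A -> P B -> P (A `|` B)) ->
  (forall A B, A `<=` B -> P B -> P A) ->
  (forall x, C x -> exists V, nbhs x V /\ P V) -> P C.
Proof.
move=> cC P0 PU PS loc; apply: contrapT => nPC.
pose G := filter_from P (fun V => C `\` V).
have FG : Filter G.
  apply: filter_from_filter; first by exists set0.
  move=> V1 V2 p1 p2; exists (V1 `|` V2); first exact: PU.
  by move=> x [Cx nV]; split; split => // h; apply: nV; [left|right].
have PG : ProperFilter G.
  apply: filter_from_proper => V PV; apply/set0P/negP => /eqP h.
  apply: nPC; apply: (PS _ V) PV => x Cx; apply: contrapT => nVx.
  have : (C `\` V) x by [].
  by rewrite h.
have GC : G C by exists set0 => // x [].
have [p [Cp clp]] := cC G PG GC.
have [V [nV PV]] := loc p Cp.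
have GV : G (C `\` V) by exists V.
by have [x [[_ nVx] Vx]] := clp _ _ GV nV.
Qed.

Section Coarse.
Context (T : topologicalType) (E : set (set (T * T))).
Hypothesis (Ep : proper_coarse E) (Ec : coarsely_connected E).

Let cs : coarse_structure E. Proof. by case: Ep. Qed.

Lemma E_sub e e' : E e -> e' `<=` e -> E e'.
Proof. by case: cs => _ h _ _ _; exact: h. Qed.
Lemma E_U e e' : E e -> E e' -> E (e `|` e').
Proof. by case: cs => _ _ h _ _; exact: h. Qed.
Lemma E_inv e : E e -> E (rel_inv e).
Proof. by case: cs => _ _ _ h _; exact: h. Qed.
Lemma E_comp e e' : E e -> E e' -> E (rel_comp e e').
Proof. by case: cs => _ _ _ _ h; exact: h. Qed.
Lemma E_diag : E (diagonal T).
Proof. by case: cs. Qed.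

Lemma bounded0 : bounded_for E set0.
Proof.
rewrite /bounded_for; apply: (E_sub (e' := set0 `*` set0) E_diag).
by move=> -[a b] [/= h _]; case: h.
Qed.

Lemma bounded_sub A B : A `<=` B -> bounded_for E B -> bounded_for E A.
Proof.
rewrite /bounded_for => AB EB; apply: (E_sub (e' := A `*` A) EB).
by move=> -[a b] [/= /AB ? /AB ?].
Qed.

Lemma boundedU A B : bounded_for E A -> bounded_for E B -> bounded_for E (A `|` B).
Proof.
move=> bA bB.
have [[a Aa]|nA] := pselect (A !=set0); last first.
  by apply: bounded_sub bB => x [Ax|//]; case: nA; exists x.
have [[b Bb]|nB] := pselect (B !=set0); last first.
  by apply: bounded_sub bA => x [//|Bx]; case: nB; exists x.
pose c := rel_comp (rel_comp (A `*` A) [set (a, b)]) (B `*` B).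
have Ec' : E c by apply: E_comp => //; apply: E_comp => //; exact: Ec.
rewrite /bounded_for; apply: (E_sub (e' := (A `|` B) `*` (A `|` B))
  (E_U (E_U bA bB) (E_U Ec' (E_inv Ec')))).
move=> -[x y] [/= [Ax|Bx] [Ay|By]].
- by left; left.
- by right; left; exists b; split => //; exists a.
- by right; right; exists b; split => //; exists a.
- by left; right.
Qed.

Lemma near_diag : exists2 N, E N & forall x : T, exists V, nbhs x V /\ V `*` V `<=` N.
Proof.
case: Ep => _ [N [EN [U [oU dU UN]]]] _; exists N => // x.
have : nbhs (x, x) U by apply: open_nbhs_nbhs; split => //; exact: dU.
move=> [[V1 V2] /= [n1 n2] sub]; exists (V1 `&` V2); split; first exact: filterI.
by move=> [a b] [/= [? _] [_ ?]]; apply/UN/sub.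
Qed.

Lemma compact_bounded C : compact C -> bounded_for E C.
Proof.
move=> cC; apply: (compact_local (P := bounded_for E)) cC _ _ _ _.
- exact: bounded0.
- exact: boundedU.
- exact: bounded_sub.
have [N EN hN] := near_diag => x _.
have [V [nV VN]] := hN x; exists V; split => //; exact: E_sub VN.
Qed.

Lemma closure_near (S : set T) : exists2 N, E N &
  forall x, closure S x -> exists s, S s /\ N (x, s).
Proof.
have [N EN hN] := near_diag; exists N => // x clx.
have [V [nV VN]] := hN x.
have [s [Ss Vs]] := clx V nV.
by exists s; split => //; apply: VN; split => //; exact: nbhs_singleton.
Qed.

Lemma bounded_closure_compact B : bounded_for E B -> compact (closure B).
Proof. by case: Ep => _ _; apply. Qed.

End Coarse.

Lemma coarse_image (S T : Type) (ES : set (set (S * S))) (ET : set (set (T * T)))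
  (h : S -> T) : coarse_map ES ET h -> forall B, bounded_for ES B ->
  bounded_for ET (h @` B).
Proof.
move=> [hc _] B bB; have := hc _ bB.
have -> // : (fun p => (h p.1, h p.2)) @` (B `*` B) = h @` B `*` h @` B.
apply/seteqP; split.
  by move=> [x y] [[a b] [/= Ba Bb] [<- <-]]; split; [exists a|exists b].
by move=> [x y] [[a Ba ea] [b Bb eb]]; exists (a, b) => //=; rewrite ea eb.
Qed.

Section CFile.
Import Order.TTheory GRing.Theory Num.Theory.
Local Open Scope ring_scope.

Section Metrization.
Local Notation R := Rdefinitions.R.
Context (K : topologicalType) (cK : compact [set: K]) (hK : hausdorff_space K)
  (phi : nat -> K -> R) (cphi : forall n, continuous (phi n))
  (bphi : forall n x, 0 <= phi n x <= 1)
  (sep : forall x y, x <> y -> exists n, phi n x != phi n y).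

Lemma near_cont (h : K -> R) (ch : continuous h) y (r : R) : 0 < r ->
  nbhs y [set z | `|h y - h z| < r].
Proof.
move=> r0; have := ch y _ (nbhsx_ballx (h y) r r0).
move=> hb; have hb' : nbhs y (h @^-1` ball (h y) r) := hb.
by apply: filterS hb' => z; rewrite /ball /=.
Qed.

Lemma near_fin (x : K) (P : nat -> set K) : (forall n, nbhs x (P n)) ->
  forall N, nbhs x [set y | forall n, (n < N)%N -> P n y].
Proof.
move=> hP; elim => [|N IH].
  by apply: filterS (filterT) => y _ n.
apply: filterS (filterI IH (hP N)) => y [h1 h2] n.
by rewrite ltnS leq_eqVlt => /orP [/eqP ->|/h1].
Qed.

Definition tm n x y : R := `|phi n x - phi n y| / n.+1%:R.

Lemma diff_le1 n x y : `|phi n x - phi n y| <= 1.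
Proof.
have /andP [a1 a2] := bphi n x; have /andP [b1 b2] := bphi n y.
by rewrite ler_norml; apply/andP; split; lra.
Qed.

Lemma tm_ge0 n x y : 0 <= tm n x y.
Proof. by rewrite /tm divr_ge0. Qed.

Lemma tm_le_diff n x y : tm n x y <= `|phi n x - phi n y|.
Proof.
rewrite /tm ler_pdivrMr ?ltr0Sn //.
rewrite -{1}(mulr1 `|_|) ler_wpM2l //.
by rewrite ler1n.
Qed.

Lemma tm_le_inv n x y : tm n x y <= n.+1%:R^-1.
Proof.
rewrite /tm -[leRHS]mul1r; apply: ler_wpM2r; first by rewrite invr_ge0.
exact: diff_le1.
Qed.

Definition dist (x y : K) : R := sup (range (fun n => tm n x y)).

Lemma hs x y : has_sup (range (fun n => tm n x y)).
Proof.
split; first by exists (tm 0 x y), 0%N.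
exists 1 => _ [n _ <-]; apply: le_trans (tm_le_diff _ _ _) _; exact: diff_le1.
Qed.

Lemma dist_ub n x y : tm n x y <= dist x y.
Proof. by apply: sup_upper_bound (hs x y) _ _; exists n. Qed.

Lemma dist_le x y c : (forall n, tm n x y <= c) -> dist x y <= c.
Proof.
move=> h; apply: ge_sup; first by exists (tm 0 x y), 0%N.
by move=> _ [n _ <-]; exact: h.
Qed.

Lemma dist_ge0 x y : 0 <= dist x y.
Proof. exact: le_trans (tm_ge0 0 x y) (dist_ub 0 x y). Qed.

Lemma dist0 x y : dist x y = 0 <-> x = y.
Proof.
split => [d0|->]; last first.
  apply/eqP; rewrite eq_le dist_ge0 andbT; apply: dist_le => n.
  by rewrite /tm subrr normr0 mul0r.
apply: contrapT => xy; have [n hn] := sep xy.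
have : 0 < tm n x y.
  rewrite /tm divr_gt0 ?ltr0Sn // normr_gt0 subr_eq0 //.
move=> t0; have := dist_ub n x y; rewrite d0 => h.
by have := lt_le_trans t0 h; rewrite ltxx.
Qed.

Lemma dist_sym x y : dist x y = dist y x.
Proof.
rewrite /dist; have -> // : (fun n => tm n x y) = (fun n => tm n y x).
by apply/funext => n; rewrite /tm distrC.
Qed.

Lemma dist_tri x y z : dist x z <= dist x y + dist y z.
Proof.
apply: dist_le => n; apply: le_trans (lerD (dist_ub n x y) (dist_ub n y z)).
rewrite /tm -mulrDl; apply: ler_wpM2r; first by rewrite invr_ge0.
exact: ler_distD.
Qed.

Lemma exN (e : R) : 0 < e -> exists N : nat, N.+1%:R^-1 < e.
Proof.
move=> e0; have := near_infty_natSinv_lt (PosNum e0).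
by case => N _ hN; exists N; exact: (hN N (leqnn N)).
Qed.

Lemma dist_nbhs x (e : R) : 0 < e -> nbhs x [set y | dist x y < e].
Proof.
move=> e0; have e20 : 0 < e / 2 by rewrite divr_gt0.
have [N hN] := exN e20.
have := near_fin (P := fun n => [set y | `|phi n x - phi n y| < e / 2])
  (fun n => @near_cont (phi n) (@cphi n) x _ e20) N.
apply: filterS => y hy.
apply: (@le_lt_trans _ _ (e / 2)); last by lra.
apply: dist_le => n; case: (ltnP n N) => [/hy h|Nn].
  exact/ltW/(le_lt_trans (tm_le_diff n x y) h).
apply: le_trans (tm_le_inv n x y) _; apply: ltW; apply: le_lt_trans hN.
by rewrite lef_pV2 ?posrE ?ltr0Sn // ler_nat.
Qed.

Lemma metrizable_of_sep : metrizable K.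
Proof.
exists dist; split.
- exact: dist0.
- exact: dist_sym.
- exact: dist_tri.
move=> A; split => [oA x Ax|h].
  pose P (S : set K) := exists2 r : R, 0 < r & forall y, S y -> r <= dist x y.
  have cA : compact (~` A).
    apply: (subclosed_compact _ cK) => //; exact: open_closedC.
  have : P (~` A).
    apply: compact_local cA _ _ _ _.
    - by exists 1 => // y [].
    - move=> S1 S2 [r1 r10 h1] [r2 r20 h2]; exists (Num.min r1 r2).
        by rewrite lt_min r10 r20.
      by move=> y [/h1|/h2] h; rewrite ge_min h ?orbT.
    - by move=> S1 S2 S12 [r r0 h']; exists r => // y /S12 /h'.
    move=> y nAy; have xy : x <> y by move=> exy; apply: nAy; rewrite -exy.
    have [n hn] := sep xy.
    have t0 : 0 < tm n x y.
      by rewrite /tm divr_gt0 ?ltr0Sn // normr_gt0 subr_eq0.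
    pose r := tm n x y / 2.
    have r0 : 0 < r by rewrite divr_gt0.
    have s0 : 0 < r * n.+1%:R by rewrite mulr_gt0 ?ltr0Sn.
    exists [set z | `|phi n y - phi n z| < r * n.+1%:R]; split.
      exact: near_cont.
    exists r => // z hz; apply: le_trans (dist_ub n x z).
    rewrite /tm ler_pdivlMr ?ltr0Sn //.
    have := ler_distD (phi n z) (phi n x) (phi n y).
    rewrite (distrC (phi n z) (phi n y)).
    have -> : `|phi n x - phi n y| = 2 * (r * n.+1%:R).
      by rewrite /r /tm; field; rewrite addrC natr1 pnatr_eq0.
    move: hz => /=; lra.
  case=> r r0 hr; exists r; split => // y dy; apply: contrapT => nAy.
  by have := hr y nAy; rewrite leNgt dy.
have : A `<=` A°; last by rewrite openE.
move=> x Ax; have [e [e0 he]] := h x Ax.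
exact: filterS he (dist_nbhs x e0).
Qed.

End Metrization.

Lemma metrizable_of_sep_count (K : topologicalType) (I : countType)
  (cK : compact [set: K]) (hK : hausdorff_space K)
  (phi : I -> K -> Rdefinitions.R) (cphi : forall i, continuous (phi i))
  (bphi : forall i x, 0 <= phi i x <= 1)
  (sep : forall x y, x <> y -> exists i, phi i x != phi i y) : metrizable K.
Proof.
pose psi (n : nat) : K -> Rdefinitions.R :=
  if (unpickle n : option I) is Some i then phi i else fun _ => 0.
apply: (@metrizable_of_sep K cK psi).
- move=> n; rewrite /psi; case: (unpickle n) => [i|]; first exact: cphi.
  by move=> x; exact: cvg_cst.
- by move=> n x; rewrite /psi; case: (unpickle n) => [i|] //; rewrite lexx ler01.
move=> x y /sep [i hi]; exists (pickle i).
by rewrite /psi pickleK.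
Qed.

Section MetricFacts.
Local Notation R := Rdefinitions.R.
Context (T : topologicalType) (d : T -> T -> R)
  (d0 : forall x y, d x y = 0 <-> x = y) (dsym : forall x y, d x y = d y x)
  (dtri : forall x y z, d x z <= d x y + d y z)
  (dop : forall A : set T, open A <->
      (forall x, A x -> exists e : R, 0 < e /\ [set y | d x y < e] `<=` A)).

Lemma dxx x : d x x = 0. Proof. exact/d0. Qed.

Lemma d_ge0 x y : 0 <= d x y.
Proof.
have := dtri x y x; rewrite dxx (dsym y x) => h.
have : 0 <= d x y *+ 2 by rewrite mulr2n.
by rewrite pmulrn_lge0.
Qed.

Lemma open_lt c r : open [set p | d c p < r].
Proof.
apply/dop => p hp; exists (r - d c p); split; first by rewrite subr_gt0.
move=> q /= hq; have := dtri c p q; lra.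
Qed.

Lemma open_gt c r : open [set p | r < d c p].
Proof.
apply/dop => p hp; exists (d c p - r); split; first by rewrite subr_gt0.
move=> q /= hq; have := dtri c q p; rewrite (dsym q p); lra.
Qed.

Lemma closed_le c r : closed [set p | d c p <= r].
Proof.
have -> : [set p | d c p <= r] = ~` [set p | r < d c p].
  by apply/funext => p /=; rewrite propeqE; split; rewrite leNgt => /negP.
exact/open_closedC/open_gt.
Qed.

Lemma closed_ge c r : closed [set p | r <= d c p].
Proof.
have -> : [set p | r <= d c p] = ~` [set p | d c p < r].
  by apply/funext => p /=; rewrite propeqE; split; rewrite leNgt => /negP.
exact/open_closedC/open_lt.
Qed.

Lemma nbhs_d c r : 0 < r -> nbhs c [set p | d c p < r].
Proof. by move=> r0; apply: open_nbhs_nbhs; split; [exact: open_lt|rewrite /= dxx]. Qed.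

End MetricFacts.

Lemma onth_mem (T : eqType) (s : seq T) v : v \in s -> exists k, onth s k = Some v.
Proof.
elim: s => // x s IH; rewrite in_cons => /orP [/eqP ->|/IH [k hk]].
  by exists 0%N.
by exists k.+1.
Qed.

Section Ury.
Local Notation R := Rdefinitions.R.
Context (T : topologicalType) (cT : compact [set: T]) (hT : hausdorff_space T).

Lemma ury_sep (A B : set T) : closed A -> closed B -> A `&` B = set0 ->
  (forall x, A x -> @Urysohn T R A B x = 0) /\ (forall x, B x -> @Urysohn T R A B x = 1).
Proof.
move=> cA cB AB.
have us := normal_uniform_separator (compact_normal hT cT) cA cB AB.
split => x hx.
- by apply: (Urysohn_sub0 (R := R) us); exists x.
- by apply: (Urysohn_sub1 (R := R) us); exists x.
Qed.

Lemma ury01 (A B : set T) x : 0 <= @Urysohn T R A B x <= 1.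
Proof.
have : range (@Urysohn T R A B) (Urysohn A B x) by exists x.
by move/(@Urysohn_range T R A B); rewrite /= in_itv.
Qed.

End Ury.

End CFile.
Definition pers (X W : topologicalType) (f : admissible X W) (e : set (X * X)) :=
  closure ((fun p : X * X => (ginl f p.1, ginl f p.2)) @` e)
    `&` ~` range (fun p : X * X => (ginl f p.1, ginl f p.2))
  `<=` range (fun w : W => (ginr f w, ginr f w)).

Lemma persE (X : topologicalType) (o : compObj X) e : perspective o e = pers (cf o) e.
Proof. by []. Qed.

Lemma hausdorff_open (T : topologicalType) :
  (forall p q : T, p <> q -> exists U V, [/\ open U, open V, U p, V q & U `&` V = set0]) ->
  hausdorff_space T.
Proof.
move=> h; rewrite open_hausdorff => p q /eqP pq.
have [U [V [oU oV Up Vq UV]]] := h p q pq.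
by exists (U, V) => /=; [split; exact/mem_set | split => //; exact/eqP].
Qed.

Lemma open_hausdorff' (T : topologicalType) : hausdorff_space T ->
  forall p q : T, p <> q -> exists U V, [/\ open U, open V, U p, V q & U `&` V = set0].
Proof.
rewrite open_hausdorff => h p q /eqP pq.
have [[U V] /= [/set_mem Up /set_mem Vq] [oU oV /eqP UV]] := h p q pq.
by exists U, V.
Qed.

Lemma nbhs_prod (T U : topologicalType) (a : T) (b : U) A B :
  nbhs a A -> nbhs b B -> nbhs (a, b) (A `*` B).
Proof. by move=> nA nB; exists (A, B). Qed.

Lemma lc_nbhs (T : topologicalType) : locally_compact [set: T] ->
  forall x : T, exists C, [/\ nbhs x C, compact C & closed C].
Proof.
move=> lc x; have [C] := lc x I; rewrite withinET => nC [cC clC].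
by exists C.
Qed.

Section Transfer.
Context (X Y : topologicalType) (eps : set (set (X * X))) (zeta : set (set (Y * Y))).
Hypotheses (X_lc : locally_compact [set: X]) (Y_lc : locally_compact [set: Y])
  (Y_haus : hausdorff_space Y).
Hypotheses (eps_p : proper_coarse eps) (eps_c : coarsely_connected eps)
  (zeta_p : proper_coarse zeta) (zeta_c : coarsely_connected zeta).
Variables (pi : Y -> X) (pi' : X -> Y).
Hypotheses (pi_c : coarse_map zeta eps pi) (pi'_c : coarse_map eps zeta pi')
  (cl1 : close_maps eps (pi \o pi') id) (cl2 : close_maps zeta (pi' \o pi) id).

Section Obj.
Context (W : topologicalType) (f : admissible X W).
Hypotheses (cW : compact [set: W]) (cK : compact [set: glue f])
  (hK : hausdorff_space (glue f)) (dK : closure (range (ginl f)) = setT)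
  (pK : forall e, eps e -> pers f e).

Definition gmap (F : set Y) : set W :=
  if pselect (closed F) then f (closure (pi @` F)) else set0.

Lemma gmapE F : closed F -> gmap F = f (closure (pi @` F)).
Proof. by rewrite /gmap; case: pselect. Qed.

Lemma gmap_closed F : closed F -> closed (gmap F).
Proof. by move=> cF; rewrite gmapE //; apply: amap_closed; exact: closed_closure. Qed.

Lemma gmap_junk F : ~ closed F -> gmap F = set0.
Proof. by rewrite /gmap; case: pselect. Qed.

Lemma gmap0 : gmap set0 = set0.
Proof.
rewrite gmapE; last exact: closed0.
rewrite image_set0 closure0; exact: amap0.
Qed.

Lemma gmapU F1 F2 : closed F1 -> closed F2 -> gmap (F1 `|` F2) = gmap F1 `|` gmap F2.
Proof.
move=> c1 c2; rewrite !gmapE //; last exact: closedU.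
by rewrite image_setU closureU amapU //; exact: closed_closure.
Qed.

Definition g : admissible Y W := Admissible gmap_closed gmap_junk gmap0 gmapU.

Lemma gE F : closed F -> g F = f (closure (pi @` F)).
Proof. exact: gmapE. Qed.

Lemma amap_close (rho : set (X * X)) (A S : set X) : eps rho -> closed A ->
  (forall s, S s -> exists a, A a /\ rho (s, a)) -> f (closure S) `<=` f A.
Proof.
move=> Erho cA h.
have [N EN hN] := closure_near eps_p S.
apply: (persp_mono cK (pK (E_comp eps_p EN Erho))) => //; first exact: closed_closure.
move=> x /hN [s [Ss Nxs]]; have [a [Aa ra]] := h s Ss.
by exists a; split => //; exists s.
Qed.

Lemma g_compact C : compact C -> g C = set0.
Proof.
move=> cC; rewrite gE; last exact: compact_closed.
apply: compact_amap0 => //; apply: (bounded_closure_compact eps_p).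
exact: (coarse_image pi_c (compact_bounded zeta_p zeta_c cC)).
Qed.

Lemma g0_compact F : closed F -> g F = set0 -> compact F.
Proof.
move=> cF; rewrite gE // => h.
have cc : compact (closure (pi @` F)) by apply: amap0_compact cK _ _ h; exact: closed_closure.
have bF : bounded_for zeta F.
  apply: (@bounded_sub _ _ zeta_p _ (pi @^-1` closure (pi @` F))).
    by move=> y Fy; apply: subset_closure; exists y.
  by apply: pi_c.2; exact: (compact_bounded eps_p eps_c cc).
have := bounded_closure_compact zeta_p bF.
by rewrite -(closure_id F).1.
Qed.

Lemma open_lift (O : set (glue f)) : open O ->
  exists2 U : set Y, U `<=` pi @^-1` (@inl X W @^-1` O) &
    open (@gset _ _ g U (@inr X W @^-1` O)).
Proof.
move=> oO; pose A := ~` (@inl X W @^-1` O).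
have cA : closed A by apply: open_closedC; exact: open_inl.
pose F := closure (pi @^-1` A).
exists (~` F).
  move=> y nFy; apply: contrapT => nO; apply: nFy; apply: subset_closure.
  exact: nO.
apply: gset_open.
- exact/closed_openC/closed_closure.
- exact: open_inr.
rewrite setCK gE; last exact: closed_closure.
have [N EN hN] := closure_near zeta_p (pi @^-1` A).
apply: (@subset_trans _ (f A)).
  apply: (amap_close (pi_c.1 _ EN)) => //.
  move=> _ [y /hN [y0 [Ay0 Nyy0]] <-]; exists (pi y0); split => //.
  by exists (y, y0).
rewrite (gsetE O) in oO.
by case/open_gset: oO.
Qed.

Lemma Kg_compact : compact [set: glue g].
Proof.
move=> G PG _.
have [[w clw]|nw] := pselect (exists w, cluster G (inr w : glue g)).
  by exists (inr w).
pose P (V : set W) := exists S (O : set (glue g)),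
  [/\ G S, open O, V `<=` @inr Y W @^-1` O & O `&` S = set0].
have PT : P [set: W].
  apply: compact_local cW _ _ _ _.
  - exists setT, set0; split => //; [exact: filterT|exact: open0|exact: set0I].
  - move=> V1 V2 [S1 [Q1 [G1 o1 s1 e1]]] [S2 [Q2 [G2 o2 s2 e2]]].
    exists (S1 `&` S2), (Q1 `|` Q2); split; first exact: filterI.
    + exact: openU.
    + by move=> w [h|h]; [left; exact: s1|right; exact: s2].
    + apply/seteqP; split => // p [[q1|q2] [t1 t2]].
      * have : (Q1 `&` S1) p by [].
        by rewrite e1.
      * have : (Q2 `&` S2) p by [].
        by rewrite e2.
  - move=> V1 V2 V12 [S [U0 [GS oO s e]]]; exists S, U0; split => //.
    exact: subset_trans s.
  move=> w _.
  have : ~ cluster G (inr w : glue g) by move=> h; apply: nw; exists w.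
  move=> ncl; have [S [N [GS nN SN]]] : exists S N, [/\ G S, nbhs (inr w : glue g) N & S `&` N = set0].
    apply: contrapT => hh; apply: ncl => S N GS nN; apply: contrapT => hSN.
    apply: hh; exists S, N; split => //; apply/seteqP; split => // p Sp.
    by apply: hSN; exists p.
  rewrite nbhsE in nN; case: nN => O [oO Ow] ON.
  exists (@inr Y W @^-1` O); split.
    by apply: open_nbhs_nbhs; split => //; exact: open_inr.
  exists S, O; split => //; last (apply/seteqP; split => // p [] Op Sp).
  have : (S `&` N) p by split => //; exact: ON.
  by rewrite SN.
have [S [] O [GS oO WO OS]] := PT.
have cC : closed (~` O) by exact: open_closedC.
rewrite (gsetE (~` O)) in cC.
have [cF _ gF] := closed_gset cC.
have gF0 : g (@inl Y W @^-1` (~` O)) = set0.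
  apply/seteqP; split => // w /gF /= nO; apply: nO; exact: WO.
have cptF := g0_compact cF gF0.
have cpt : compact (@gset _ _ g (@inl Y W @^-1` (~` O)) set0).
  rewrite gset_image; apply: continuous_compact cptF.
  by apply: continuous_subspaceT => x; exact: ginl_continuous.
have GF : G (@gset _ _ g (@inl Y W @^-1` (~` O)) set0).
  apply: filterS GS => -[y|w] Sp /=.
  - move=> Op; have : (O `&` S) (inl y) by [].
    by rewrite OS.
  - have : (O `&` S) (inr w) by split => //; exact: WO.
    by rewrite OS.
by have [p [_ clp]] := cpt G PG GF; exists p.
Qed.


Lemma open_inl_lift (U : set Y) : open U -> open (@gset _ _ g U set0).
Proof. by move=> oU; apply: gset_open => //; [exact: open0| move=> w _ []]. Qed.

Lemma Kg_haus : hausdorff_space (glue g).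
Proof.
have sepYW : forall y w, exists U V, [/\ open U, open V, U (inl y : glue g),
    V (inr w : glue g) & U `&` V = set0].
  move=> y w; have [C [nC cC clC]] := lc_nbhs Y_lc y.
  exists (@gset _ _ g C° set0), (@gset _ _ g (~` C) setT); split => //.
  - by apply: open_inl_lift; exact: open_interior.
  - apply: gset_open; [exact: closed_openC|exact: openT|].
    by rewrite setCK g_compact.
  - apply/seteqP; split => // -[y'|w'] [] //= /interior_subset.
    by move=> Cy nCy; apply: nCy.
apply: hausdorff_open => -[y1|w1] [y2|w2] pq.
- have [U [V [oU oV Uy Vy UV]]] := open_hausdorff' Y_haus (fun e => pq (congr1 inl e)).
  exists (@gset _ _ g U set0), (@gset _ _ g V set0); split => //; try exact: open_inl_lift.
  apply/seteqP; split => // -[y|w] [] //= Uy' Vy'.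
  by have : (U `&` V) y by []; rewrite UV.
- exact: sepYW.
- have [U [V [oU oV Uy Vw UV]]] := sepYW y2 w1.
  by exists V, U; split => //; rewrite setIC.
have w12 : w1 <> w2 by move=> e; apply: pq; rewrite e.
have nq : ~ ((inr w1 : glue f) = inr w2) by move=> [] e; apply: w12.
have := open_hausdorff' hK nq; case=> O1; case=> O2; case=> op1 op2 O1w O2w O12.
have [U1 U1s oU1] := open_lift op1.
have [U2 U2s oU2] := open_lift op2.
exists (@gset _ _ g U1 (@inr X W @^-1` O1)), (@gset _ _ g U2 (@inr X W @^-1` O2)).
split => //.
apply/seteqP; split => // -[y|w] [] //=.
- move=> /U1s h1 /U2s h2.
  by have : (O1 `&` O2) (inl (pi y)) by []; rewrite O12.
- move=> h1 h2.
  by have : (O1 `&` O2) (inr w) by []; rewrite O12.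
Qed.

Lemma range_inl (A B : topologicalType) (h : admissible A B) :
  range (ginl h) = @gset _ _ h setT set0.
Proof.
apply/seteqP; split; first by move=> _ [x _ <-].
by move=> [x|w] //= _; exists x.
Qed.

Lemma Kg_dense : closure (range (ginl g)) = setT.
Proof.
rewrite range_inl closure_inl; last exact: closedT.
apply/seteqP; split => // -[y|w] _ //.
change (g setT w); rewrite gE; last exact: closedT.
have fT : f setT w.
  have : closure (range (ginl f)) (inr w) by rewrite dK.
  by rewrite range_inl closure_inl //; exact: closedT.
apply: (persp_mono cK (pK (E_inv eps_p cl1))) fT.
- exact: closed_closure.
- exact: closedT.
move=> x _; exists (pi (pi' x)); split.
  by apply: subset_closure; exists (pi' x).
by exists x.
Qed.


Lemma Kg_persp e : zeta e -> pers g e.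
Proof.
move=> ze [p1 p2] [clp nYY].
case: p1 clp nYY => [y1|w1]; case: p2 => [y2|w2] clp nYY.
- by case: nYY; exists (y1, y2).
- exfalso.
  have [C [nC cC clC]] := lc_nbhs Y_lc y1.
  pose B := [set y | exists y0, C y0 /\ e (y0, y)].
  have bB : bounded_for zeta B.
    rewrite /bounded_for.
    apply: (E_sub zeta_p (e := rel_comp (rel_comp (rel_inv e) (C `*` C)) e)).
      apply: (E_comp zeta_p _ ze); apply: (E_comp zeta_p (E_inv zeta_p ze)).
      exact: (compact_bounded zeta_p zeta_c cC).
    move=> [a b] [/= [a0 [Ca0 ea]] [b0 [Cb0 eb]]].
    by exists b0; split => //; exists a0.
  have cB := bounded_closure_compact zeta_p bB.
  have cl : closed (@gset _ _ g (closure B) set0).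
    apply: gset_closed; [exact: closed_closure|exact: closed0|by rewrite g_compact].
  have nO : nbhs (inr w2 : glue g) (~` @gset _ _ g (closure B) set0).
    by apply: open_nbhs_nbhs; split => //; exact: closed_openC.
  have := clp _ (nbhs_prod (nbhs_inl g nC) nO).
  case=> _ [[[a b] eab <-] [/= Ca nB]].
  by apply: nB; apply: subset_closure; exists a.
- exfalso.
  have [C [nC cC clC]] := lc_nbhs Y_lc y2.
  pose B := [set y | exists y0, C y0 /\ e (y, y0)].
  have bB : bounded_for zeta B.
    rewrite /bounded_for.
    apply: (E_sub zeta_p (e := rel_comp (rel_comp e (C `*` C)) (rel_inv e))).
      apply: (E_comp zeta_p _ (E_inv zeta_p ze)); apply: (E_comp zeta_p ze).
      exact: (compact_bounded zeta_p zeta_c cC).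
    move=> [a b] [/= [a0 [Ca0 ea]] [b0 [Cb0 eb]]].
    by exists b0; split => //; exists a0.
  have cB := bounded_closure_compact zeta_p bB.
  have cl : closed (@gset _ _ g (closure B) set0).
    apply: gset_closed; [exact: closed_closure|exact: closed0|by rewrite g_compact].
  have nO : nbhs (inr w1 : glue g) (~` @gset _ _ g (closure B) set0).
    by apply: open_nbhs_nbhs; split => //; exact: closed_openC.
  have := clp _ (nbhs_prod nO (nbhs_inl g nC)).
  case=> _ [[[a b] eab <-] [/= nB Cb]].
  by apply: nB; apply: subset_closure; exists b.
have [<-|w12] := pselect (w1 = w2); first by exists w1.
exfalso.
pose e' := (fun p => (pi p.1, pi p.2)) @` e.
have Ee' : eps e' := pi_c.1 _ ze.
have ncl : ~ closure ((fun p : X * X => (ginl f p.1, ginl f p.2)) @` e') (inr w1, inr w2).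
  move=> h.
  have nXX : (~` range (fun p : X * X => (ginl f p.1, ginl f p.2))) (inr w1, inr w2).
    by move=> [[x1 x2] _ []].
  have [w0 _ [e1 e2]] := pK Ee' (conj h nXX).
  by apply: w12; rewrite -e1 -e2.
have [M nM Mdisj] : exists2 M, nbhs (inr w1 : glue f, inr w2 : glue f) M &
    ((fun p : X * X => (ginl f p.1, ginl f p.2)) @` e') `&` M = set0.
  apply: contrapT => hh; apply: ncl => M nM; apply/set0P/negP => /eqP h.
  by apply: hh; exists M.
case: nM => -[V1 V2] /= [n1 n2] sub.
move: n1; rewrite nbhsE; case=> Q1 [] op1 Q1w Q1V.
move: n2; rewrite nbhsE; case=> Q2 [] op2 Q2w Q2V.
have [U1 U1s oU1] := open_lift op1.
have [U2 U2s oU2] := open_lift op2.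
have := clp _ (nbhs_prod (@open_nbhs_nbhs _ (inr w1 : glue g) _ (conj oU1 Q1w))
                         (@open_nbhs_nbhs _ (inr w2 : glue g) _ (conj oU2 Q2w))).
case=> _ [[[a b] eab <-] [/= /U1s ha /U2s hb]].
have : (((fun p : X * X => (ginl f p.1, ginl f p.2)) @` e') `&` M)
    (inl (pi a), inl (pi b)).
  split; first by exists (pi a, pi b) => //; exists (a, b).
  by apply: sub; split; [exact: Q1V|exact: Q2V].
by rewrite Mdisj.
Qed.


Section Metr.
Import Order.TTheory GRing.Theory Num.Theory.
Local Open Scope ring_scope.
Local Notation R := Rdefinitions.R.
Hypotheses (Y_sc : @second_countable Y) (mK : metrizable (glue f)).

Lemma sepY (phiY : nat -> nat -> glue g -> R)
  (dec : nat -> set Y) (BY : set (set Y)) (c : set Y -> nat)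
  (BYo : BY `<=` open) (BYb : forall y, filter_from [set U | BY U /\ U y] id --> y)
  (decE : forall b, BY b -> dec (c b) = b)
  (phiYE : forall n1 n2, phiY n1 n2 =
     @Urysohn _ R (@gset _ _ g (closure (dec n1)) set0) (~` @gset _ _ g (dec n2) set0))
  (y : Y) (q : glue g) : inl y <> q -> exists n1 n2, phiY n1 n2 (inl y) != phiY n1 n2 q.
Proof.
move=> yq.
have [C [nC cC clC]] := lc_nbhs Y_lc y.
have [U [oU Uy nUq]] : exists U, [/\ open U, U y & ~ @gset _ _ g U set0 q].
  case: q yq => [y'|w] yq.
    have yy' : y <> y' by move=> e; apply: yq; rewrite e.
    have [U [V [oU oV Uy Vy' UV]]] := open_hausdorff' Y_haus yy'.
    exists U; split => // /= Uy'.
    by have : (U `&` V) y' by []; rewrite UV.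
  by exists setT; split => //; exact: openT.
have nN : nbhs y (C° `&` U).
  by apply: filterI; [exact: nbhs_interior|apply: open_nbhs_nbhs; split].
have [b2 [Bb2 b2y] b2N] := BYb y _ nN.
have nb2 : nbhs y b2 by apply: open_nbhs_nbhs; split => //; exact: BYo.
have [V nV clV] := compact_regular Y_haus cC nC nb2.
have [b1 [Bb1 b1y] b1V] := BYb y _ nV.
exists (c b1), (c b2); rewrite !phiYE !decE //.
have sub1 : closure b1 `<=` b2.
  by apply: subset_trans clV; exact: closureS.
have cpt1 : compact (closure b1).
  apply: (subclosed_compact _ cC); first exact: closed_closure.
  by move=> z /sub1 /b2N [/interior_subset].
have cA : closed (@gset _ _ g (closure b1) set0).
  apply: gset_closed; [exact: closed_closure|exact: closed0|by rewrite g_compact].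
have cB : closed (~` @gset _ _ g b2 set0).
  by apply: open_closedC; apply: open_inl_lift; exact: BYo.
have AB : @gset _ _ g (closure b1) set0 `&` ~` @gset _ _ g b2 set0 = set0.
  apply/seteqP; split => // -[z|w] [] //= h1 h2.
  by apply: h2; exact: sub1.
have [u0 u1] := ury_sep Kg_compact Kg_haus cA cB AB.
rewrite u0; last by apply: subset_closure.
rewrite u1; first by rewrite eq_sym oner_eq0.
case: q yq nUq {u0 u1} => [y'|w] //= _ nU b2y'.
by apply: nU; have [] := b2N _ b2y'.
Qed.

Lemma Kg_metrizable : metrizable (glue g).
Proof.
case: mK => d [d0 dsym dtri dop].
case: Y_sc => BY cBY [BYo BYb].
have /countable_injP [c cinj] := cBY.
pose dec (n : nat) : set Y :=
  if pselect (exists b, BY b /\ c b = n) is left h then projT1 (boolp.cid h) else set0.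
have decE : forall b, BY b -> dec (c b) = b.
  move=> b Bb; rewrite /dec; case: pselect => [h|nh]; last by case: nh; exists b.
  case: (boolp.cid h) => b' [Bb' cb'] /=; apply: cinj => //; exact: mem_set.
have cover : forall m : nat, exists s : seq W, forall w,
    exists2 v, v \in s & d (inr w) (inr v) < m.+1%:R^-1.
  move=> m; have r0 : 0 < m.+1%:R^-1 :> R by rewrite invr_gt0 ltr0Sn.
  pose P (S : set W) := exists s : seq W, forall w, S w ->
    exists2 v, v \in s & d (inr w) (inr v) < m.+1%:R^-1.
  suff [s hs] : P setT by exists s => w; exact: hs.
  apply: compact_local cW _ _ _ _.
  - by exists [::].
  - move=> S1 S2 [s1 h1] [s2 h2]; exists (s1 ++ s2) => w [/h1|/h2] [v vs dv];
      by exists v => //; rewrite mem_cat vs ?orbT.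
  - by move=> S1 S2 S12 [s h]; exists s => w /S12 /h.
  move=> w _; exists (@inr X W @^-1` [set p | d (inr w) p < m.+1%:R^-1]); split.
    apply: open_nbhs_nbhs; split; first exact/open_inr/(open_lt dtri dop).
    by rewrite /= (dxx d0).
  exists [:: w] => w' hw'; exists w; first by rewrite mem_seq1.
  by rewrite dsym.
have /choice [s hs] := cover.
pose rr (m : nat) : R := m.+1%:R^-1.
pose Aw (v : W) (m : nat) := @gset _ _ g set0 [set u | d (inr v) (inr u) <= rr m].
pose Bw (v : W) (m : nat) := @gset _ _ g set0 [set u | 2 * rr m <= d (inr v) (inr u)].
pose psiW (m k : nat) : glue g -> R :=
  if onth (s m) k is Some v then @Urysohn _ R (Aw v m) (Bw v m) else fun _ => 0.
pose phiY (n1 n2 : nat) : glue g -> R :=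
  @Urysohn _ R (@gset _ _ g (closure (dec n1)) set0) (~` @gset _ _ g (dec n2) set0).
pose phi (i : ((nat * nat) + (nat * nat))%type) : glue g -> R :=
  match i with inl (n1, n2) => phiY n1 n2 | inr (m, k) => psiW m k end.
apply: (@metrizable_of_sep_count _ _ Kg_compact Kg_haus phi).
- case => [[n1 n2]|[m k]] /=; first exact: Urysohn_continuous.
  rewrite /psiW; case: onth => [v|]; first exact: Urysohn_continuous.
  by move=> x; apply: cvg_cst; exact: nbhs_filter.
- case => [[n1 n2]|[m k]] x /=; first exact: ury01.
  rewrite /psiW; case: onth => [v|]; first exact: ury01.
  by rewrite lexx ler01.
move=> p q pq.
have hY := @sepY phiY dec BY c BYo BYb decE (fun _ _ => erefl).
case: p pq => [y|w1] pq.
  by have [n1 [n2 h]] := hY y q pq; exists (inl (n1, n2)).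
case: q pq => [y|w2] pq.
  have [n1 [n2 h]] := hY y (inr w1) (fun e => pq (esym e)).
  by exists (inl (n1, n2)); rewrite eq_sym.
have w12 : inr w1 <> inr w2 :> glue f by move=> [e]; apply: pq; rewrite e.
have dpos : 0 < d (inr w1) (inr w2).
  rewrite lt_neqAle (d_ge0 d0 dsym dtri) andbT.
  by apply/eqP => /esym/d0.
have [m hm] := @exN (d (inr w1) (inr w2) / 3) (divr_gt0 dpos (ltr0Sn _ 2)).
have [v vs dv] := hs m w1.
have [k hk] := onth_mem vs.
exists (inr (m, k)); rewrite /= /psiW hk.
have r0 : 0 < rr m by rewrite invr_gt0 ltr0Sn.
have cA : closed (Aw v m).
  apply: gset_closed; [exact: closed0| |by rewrite amap0; exact: sub0set].
  exact: (closed_inr (@closed_le _ _ dsym dtri dop (inr v) (rr m))).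
have cB : closed (Bw v m).
  apply: gset_closed; [exact: closed0| |by rewrite amap0; exact: sub0set].
  exact: (closed_inr (@closed_ge _ _ dtri dop (inr v) (2 * rr m))).
have AB : Aw v m `&` Bw v m = set0.
  apply/seteqP; split => // -[z|u] [] //= h1 h2.
  rewrite /= in h1 h2; move: h1 h2 r0; rewrite /rr; move: (m.+1%:R^-1) => t; lra.
have [u0 u1] := ury_sep Kg_compact Kg_haus cA cB AB.
rewrite u0 ?u1.
- by rewrite eq_sym oner_eq0.
- have := dtri (inr w1) (inr v) (inr w2).
  rewrite /= /rr; move: dv hm; rewrite /rr; move: (m.+1%:R^-1) => t; lra.
- by rewrite /= dsym; exact: ltW.
Qed.

End Metr.
End Obj.
End Transfer.

Section Gen.

Lemma adm_eq (X W : topologicalType) (f1 f2 : admissible X W) :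
  (forall F, f1 F = f2 F) -> f1 = f2.
Proof.
case: f1 f2 => a1 c1 j1 z1 u1 [a2 c2 j2 z2 u2] /= e.
have ea : a1 = a2 by apply/funext.
subst a2; congr Admissible; apply: Prop_irrelevance.
Qed.

Lemma compObj_eq (X W : topologicalType) (f1 f2 : admissible X W) p1 p2 p3 p1' p2' p3' :
  f1 = f2 -> @CompObj X W f1 p1 p2 p3 = @CompObj X W f2 p1' p2' p3'.
Proof. by move=> e; subst f2; congr CompObj; apply: Prop_irrelevance. Qed.

Lemma sig_eq (T : Type) (P : T -> Prop) (a b : {x | P x}) :
  proj1_sig a = proj1_sig b -> a = b.
Proof.
case: a b => x px [y py] /= e; subst y; congr exist; apply: Prop_irrelevance.
Qed.

Lemma homeq (X : topologicalType) (a b : compObj X) (h1 h2 : compHom a b) :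
  (forall p, proj1_sig h1 p = proj1_sig h2 p) -> h1 = h2.
Proof. by move=> e; apply: sig_eq; apply/funext. Qed.

Definition hval (X : topologicalType) (E : set (set (X * X))) (a b : Ob (MPers E))
  (h : Hom (MPers E) a b) :
  {p : topologicalType * topologicalType & (X + p.1 -> X + p.2)%type} :=
  existT (fun p : topologicalType * topologicalType => (X + p.1 -> X + p.2)%type)
    (cW (proj1_sig a), cW (proj1_sig b)) (proj1_sig h).

Lemma hval_cast (X : topologicalType) (E : set (set (X * X))) (a a' b b' : Ob (MPers E))
  (ea : a = a') (eb : b = b') (h : Hom (MPers E) a b) :
  hval (castHom ea eb h) = hval h.
Proof. by case: a' / ea; case: b' / eb. Qed.

Lemma hval_inj (X : topologicalType) (E : set (set (X * X))) (a b : Ob (MPers E))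
  (h1 h2 : Hom (MPers E) a b) : hval h1 = hval h2 -> h1 = h2.
Proof.
move=> e; apply: sig_eq; exact: (Eqdep.EqdepTheory.inj_pair2 _ _ _ _ _ e).
Qed.

Lemma h_W (X : topologicalType) (X_lc : locally_compact [set: X]) (a b : compObj X)
  (hKa : hausdorff_space (glue (cf a)))
  (dKa : closure (range (ginl (cf a))) = setT) (h : compHom a b) (w : cW a) :
  exists w', proj1_sig h (inr w) = inr w'.
Proof.
case: h => h [ch hinl] /=.
case E: (h (inr w)) => [x|w']; last by exists w'.
exfalso.
have [C [nC cC clC]] := lc_nbhs X_lc x.
have oO : open (@gset _ _ (cf b) C° set0).
  by apply: gset_open; [exact: open_interior|exact: open0|move=> ? _ []].
have oP : open (h @^-1` (@gset _ _ (cf b) C° set0)) := (continuousP h).1 ch _ oO.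
have Pw : (h @^-1` (@gset _ _ (cf b) C° set0)) (inr w).
  by rewrite /= E; exact: (nbhs_singleton (nbhs_interior nC)).
have clw : closure (@gset _ _ (cf a) C set0) (inr w).
  move=> N nN.
  have nPN : nbhs (inr w : glue (cf a)) (h @^-1` (@gset _ _ (cf b) C° set0) `&` N).
    exact: filterI (open_nbhs_nbhs (conj oP Pw)) nN.
  have : closure (range (ginl (cf a))) (inr w) by rewrite dKa.
  move/(_ _ nPN) => [_ [[x' _ <-] [hx' Nx']]].
  exists (inl x'); split => //.
  by move: hx'; rewrite /= hinl => /interior_subset.
by move: clw; rewrite closure_inl //= (compact_amap0 hKa cC).
Qed.

End Gen.

Section MO.
Context (X : topologicalType) (E : set (set (X * X))) (o : compObj X) (ho : MPers_obj E o).
Lemma mo_haus : hausdorff_space (glue (cf o)). Proof. by case: ho => [[]]. Qed.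
Lemma mo_dense : closure (range (ginl (cf o))) = setT. Proof. by case: ho => [[]]. Qed.
Lemma mo_pers : forall e, E e -> pers (cf o) e. Proof. by case: ho => _ h _ e /h. Qed.
Lemma mo_metr : metrizable (glue (cf o)). Proof. by case: ho. Qed.
End MO.

Section Fun.
Context (X Y : topologicalType) (eps : set (set (X * X))) (zeta : set (set (Y * Y))).
Hypotheses (X_lc : locally_compact [set: X]) (Y_lc : locally_compact [set: Y])
  (Y_haus : hausdorff_space Y) (Y_sc : @second_countable Y).
Hypotheses (eps_p : proper_coarse eps) (eps_c : coarsely_connected eps)
  (zeta_p : proper_coarse zeta) (zeta_c : coarsely_connected zeta).
Variables (pi : Y -> X) (pi' : X -> Y).
Hypotheses (pi_c : coarse_map zeta eps pi) (cl1 : close_maps eps (pi \o pi') id).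

Definition TOc (o : compObj X) : compObj Y :=
  @CompObj Y (cW o) (g pi (cf o)) (@cW_compact _ o) (@cW_hausdorff _ o)
    (Kg_compact eps_p eps_c zeta_p pi_c (@cW_compact _ o) (@c_compact _ o)).

Lemma TOc_ok o : MPers_obj eps o -> MPers_obj zeta (TOc o).
Proof.
move=> ho; have hK := mo_haus ho; have dK := mo_dense ho.
have pK := mo_pers ho; have mK := mo_metr ho.
split.
- split.
  + exact: (Kg_haus Y_lc Y_haus eps_p zeta_p zeta_c pi_c (@c_compact _ o) hK pK).
  + exact: (Kg_dense eps_p cl1 (@c_compact _ o) dK pK).
- move=> e ze; rewrite persE.
  exact: (Kg_persp Y_lc Y_haus eps_p zeta_p zeta_c pi_c (@c_compact _ o) hK pK ze).
- exact: (Kg_metrizable Y_lc Y_haus eps_p eps_c zeta_p zeta_c pi_c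
    (@cW_compact _ o) (@c_compact _ o) hK pK Y_sc mK).
Qed.

Definition TObj (a : Ob (MPers eps)) : Ob (MPers zeta) :=
  exist _ (TOc (proj1_sig a)) (TOc_ok (proj2_sig a)).

Definition Thom_fun (a b : compObj X) (h : compHom a b) :
  glue (cf (TOc a)) -> glue (cf (TOc b)) :=
  fun p => match p with
  | inl y => inl y
  | inr w => match proj1_sig h (inr w) with inr w' => inr w' | inl x => inl (pi' x) end
  end.

Lemma Thom_cont (a b : Ob (MPers eps)) (h : Hom (MPers eps) a b) :
  continuous (@Thom_fun (proj1_sig a) (proj1_sig b) h).
Proof.
have hW := h_W X_lc (mo_haus (proj2_sig a)) (mo_dense (proj2_sig a)) h.
move: hW; case: a b h => [oa ha] [ob hb] [h [ch hinl]] /= hW.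
apply/continuousP => U oU.
rewrite (gsetE U) in oU; have [oU1 oU2 sub] := open_gset oU.
pose F' := ~` (@inl Y (cW ob) @^-1` U).
have cF' : closed F' by exact: open_closedC.
pose Z' := @gset _ _ (cf ob) (closure (pi @` F')) (~` (@inr Y (cW ob) @^-1` U)).
have cZ' : closed Z'.
  apply: gset_closed; [exact: closed_closure|exact: open_closedC|].
  by rewrite -(gE pi (cf ob) cF').
have cZ : closed (h @^-1` Z').
  rewrite -openC; exact: ((continuousP h).1 ch _ (closed_openC cZ')).
rewrite (gsetE (h @^-1` Z')) in cZ.
have [_ cD fD] := closed_gset cZ.
have inlZ : (@inl X (cW oa) @^-1` (h @^-1` Z')) = closure (pi @` F').
  by apply/funext => x; rewrite /= (hinl x).
rewrite inlZ in fD.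
have VD : ~` [set w | U (@Thom_fun oa ob (exist _ h (conj ch hinl)) (inr w))] =
    (@inr X (cW oa) @^-1` (h @^-1` Z')).
  apply/funext => w /=; have [w' e] := hW w.
  by rewrite /Thom_fun /= e.
rewrite (gsetE (_ @^-1` U)); apply: gset_open => //.
  by rewrite -closedC VD.
by rewrite VD (gE pi (cf oa) cF').
Qed.

Definition Thom (a b : Ob (MPers eps)) (h : Hom (MPers eps) a b) :
  Hom (MPers zeta) (TObj a) (TObj b) :=
  exist _ (@Thom_fun (proj1_sig a) (proj1_sig b) h) (conj (@Thom_cont a b h) (fun y => erefl)).

Lemma TF_id (a : Ob (MPers eps)) : Thom (cid a) = cid (TObj a).
Proof. by apply: homeq => -[y|w]. Qed.

Lemma TF_comp (a b c : Ob (MPers eps)) (g0 : Hom (MPers eps) b c) (h : Hom (MPers eps) a b) :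
  Thom (ccomp g0 h) = ccomp (Thom g0) (Thom h).
Proof.
apply: homeq => -[y|w] //=.
have [w1 e1] := h_W X_lc (mo_haus (proj2_sig a)) (mo_dense (proj2_sig a)) h w.
have [w2 e2] := h_W X_lc (mo_haus (proj2_sig b)) (mo_dense (proj2_sig b)) g0 w1.
by rewrite /Thom_fun /= e1 e2.
Qed.

Definition TF : functor (MPers eps) (MPers zeta) := @Functor _ _ TObj Thom TF_id TF_comp.

Lemma rt_amap (o : compObj X) (ho : MPers_obj eps o) (F : set X) :
  g pi' (g pi (cf o)) F = cf o F.
Proof.
have pK := mo_pers ho.
have [cF|ncF] := pselect (closed F); last by rewrite !amap_junk.
rewrite (gE _ _ cF) (gE _ _ (@closed_closure _ _)).
have [N EN hN] := closure_near zeta_p (pi' @` F).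
apply/seteqP; split.
- apply: (amap_close eps_p (@c_compact _ o) pK
    (rho := rel_comp ((fun p => (pi p.1, pi p.2)) @` N) (range (fun x => (pi (pi' x), x))))).
  + exact: (E_comp eps_p (pi_c.1 _ EN) cl1).
  + exact: cF.
  move=> _ [y /hN [_ [[x Fx <-] Nyy0]] <-]; exists x; split => //.
  exists (pi (pi' x)); split; last by exists x.
  by exists (y, pi' x).
- apply: (persp_mono (@c_compact _ o) (pK _ (E_inv eps_p cl1))).
  + exact: closed_closure.
  + exact: cF.
  move=> x Fx; exists (pi (pi' x)); split; last by exists x.
  apply: subset_closure; exists (pi' x) => //.
  by apply: subset_closure; exists x.
Qed.

End Fun.

Unset Implicit Arguments.
Theorem mainTheorem2 (X Y : topologicalType)
  (X_lc : locally_compact [set: X]) (X_pc : paracompact X)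
  (X_haus : hausdorff_space X) (X_sc : @second_countable X)
  (Y_lc : locally_compact [set: Y]) (Y_pc : paracompact Y)
  (Y_haus : hausdorff_space Y) (Y_sc : @second_countable Y)
  (eps : set (set (X * X))) (zeta : set (set (Y * Y)))
  (eps_proper : proper_coarse eps) (eps_conn : coarsely_connected eps)
  (zeta_proper : proper_coarse zeta) (zeta_conn : coarsely_connected zeta)
  (pi : Y -> X) (pi_eq : coarse_equivalence zeta eps pi) :
  cat_iso (MPers eps) (MPers zeta).
Proof.
case: pi_eq => pi_c [pi' [pi'_c cl2 cl1]].
pose F := TF X_lc Y_lc Y_haus Y_sc eps_proper eps_conn zeta_proper zeta_conn pi_c cl1.
pose G := TF Y_lc X_lc X_haus X_sc zeta_proper zeta_conn eps_proper eps_conn pi'_c cl2.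
have eGF : forall a, F0 G (F0 F a) = a.
  move=> [[W f p1 p2 p3] ho]; apply: sig_eq => /=; apply: compObj_eq.
  apply: adm_eq => S.
  exact: (rt_amap eps_proper zeta_proper pi_c cl1 ho S).
have eFG : forall b, F0 F (F0 G b) = b.
  move=> [[W f p1 p2 p3] ho]; apply: sig_eq => /=; apply: compObj_eq.
  apply: adm_eq => S.
  exact: (rt_amap zeta_proper eps_proper pi'_c cl2 ho S).
exists F, G, eGF, eFG; split.
- move=> a b h; apply: hval_inj; rewrite hval_cast /hval /=.
  have hW := h_W X_lc (mo_haus (proj2_sig a)) (mo_dense (proj2_sig a)) h.
  move: hW; case: h => h [ch hinl] /= hW.
  congr (existT _ _ _); apply/funext => -[x|w] /=.
    exact: (esym (hinl x)).
  have [w' e] := hW w.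
  by rewrite /Thom_fun /= e.
- move=> a b h; apply: hval_inj; rewrite hval_cast /hval /=.
  have hW := h_W Y_lc (mo_haus (proj2_sig a)) (mo_dense (proj2_sig a)) h.
  move: hW; case: h => h [ch hinl] /= hW.
  congr (existT _ _ _); apply/funext => -[x|w] /=.
    exact: (esym (hinl x)).
  have [w' e] := hW w.
  by rewrite /Thom_fun /= e.
Qed.
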